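(* Let $k\ge2$, $K\ge1$ be integers, let $R\ge k$ be an integer and $L$ a positive integer divisible by $R^{K-1}$. For $A$ dividing $L$ let $f_A=(\mathsf{1}^A\mathsf{2}^A\cdots\mathsf{k}^A)^{L/A}\in[k]^{kL}$, and for a word $w$ over $[K]$ let $\hat w$ be the word over $[k]$ obtained by replacing each symbol $l\in[K]$ of $w$ by $f_{R^{l-1}}$. Let $w_1,w_2$ be words over $[K]$ and let $s=(w_1',w_2')$ be any common subsequence between $\hat w_1$ and $\hat w_2$. Then \[\operatorname{span} s\ \ge\ \left(k+1-\frac kR-\frac{8R^{K-1}}{L}\right)\operatorname{len} s-2Lk(k+1)\cdot\mathrm{LCS}(w_1,w_2)-16R^{K-1}.\]
   Context: $\alpha^A$ denotes letter $\alpha$ repeated $A$ times, and $u^m$ denotes $m$ concatenated copies of the word $u$. Symbols are distinguishable positions. A common subsequence of words $u_1,u_2$ is a pair $(u_1',u_2')$ of subsequences of $u_1,u_2$ that are equal as words; $\operatorname{len}$ is their common length; $\mathrm{LCS}(u_1,u_2)$ is the maximum length of a common subsequence. The span of a subsequence $u'$ in $u$ is the length of the shortest block of consecutive symbols of $u$ containing $u'$, and $\operatorname{span}(u_1',u_2')=\operatorname{span}_{u_1}u_1'+\operatorname{span}_{u_2}u_2'$. *)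

(* Defs.v *)
From mathcomp Require Import all_boot all_order all_algebra.
Set Implicit Arguments. Unset Strict Implicit. Unset Printing Implicit Defensive.

Definition word_over (n : nat) (w : seq nat) : bool :=
  all (fun a => (1 <= a <= n)%N) w.

Definition fblock (k L A : nat) : seq nat :=
  flatten (nseq (L %/ A) (flatten [seq nseq A i | i <- iota 1 k])).

Definition hat (k L R : nat) (w : seq nat) : seq nat :=
  flatten [seq fblock k L (R ^ l.-1) | l <- w].

(* A subsequence of u is given by a selection mask b (size b = size u);
   symbols are distinguishable positions. *)
Definition positions (b : bitseq) : seq nat :=
  [seq i <- iota 0 (size b) | nth false b i].

(* span of the subsequence selected by b: length of the shortest block of
   consecutive symbols containing it (0 for the empty subsequence). *)
Definition span_mask (b : bitseq) : nat :=
  if positions b is i :: _ then (last i (positions b) - i).+1 else 0.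

Definition common_subseq (u1 u2 : seq nat) (b1 b2 : bitseq) : Prop :=
  size b1 = size u1 /\ size b2 = size u2 /\ mask b1 u1 = mask b2 u2.

Definition cs_len (u1 : seq nat) (b1 : bitseq) : nat := size (mask b1 u1).

Definition cs_span (b1 b2 : bitseq) : nat := span_mask b1 + span_mask b2.

Definition LCS (u1 u2 : seq nat) : nat :=
  \max_(b : (size u1).-tuple bool | subseq (mask b u1) u2) size (mask b u1).

(* Main.v *)
Require Import Defs.
From mathcomp Require Import all_boot all_order all_algebra zify.
From mathcomp Require Import lra ring.

Lemma core_nat (j s A t pi a d a' rho b e b' : nat) :
  0 < A -> a < A -> a' < A -> b < (j.+1 + s) * A + t -> b' < (j.+1 + s) * A + t ->
  pi*A + a < (pi+d)*A + a' -> rho*((j.+1 + s) * A + t) + b < (rho+e)*((j.+1 + s) * A + t) + b' ->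
  (e = 0 -> d = 0 \/ j.+1 <= d) ->
  (j.+1 + s)*((pi+d)*A + a' + ((rho+e)*((j.+1 + s) * A + t) + b')) + j.+1 + (j.+1 + s)*j*a' + j.+1*b
   >= (j.+1 + s)*(pi*A + a + (rho*((j.+1 + s) * A + t)+b)) + (j.+1 + s)*(j.+2) + (j.+1 + s)*j*a + j.+1*b'.
Proof.
set k := j.+1. set R := k + s. set B := R * A + t.
move=> A0 aA aA' bB bB' hp hq hl.
have hA : R*k*(a.+1) <= R*k*(a' + A).
  by rewrite leq_mul2l; apply/orP; right; lia.
have hB : s*b.+1 <= s*(b' + B).
  by rewrite leq_mul2l; apply/orP; right; lia.
case: d hp hl => [|d] hp hl.
- have aa : a.+1 <= a'.
    by rewrite !addn0 in hp; lia.
  have h1 : R*k*a.+1 <= R*k*a' by rewrite leq_mul2l aa orbT.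
  case: e hq hl => [|e] hq hl.
  + have bb : b.+1 <= b' by rewrite !addn0 in hq; lia.
    have h2 : s*b.+1 <= s*b' by rewrite leq_mul2l bb orbT.
    rewrite /B /R /k in h1 h2 *. lia.
  + have h3 : R*(e.+1*B) >= R * B by rewrite leq_mul2l leq_pmull ?orbT.
    rewrite /B /R /k in h1 h3 hB *. lia.
- case: e hq hl => [|e] hq hl.
  + have [//|kd] := hl erefl.
    have bb : b.+1 <= b' by rewrite !addn0 in hq; lia.
    have h2 : s*b.+1 <= s*b' by rewrite leq_mul2l bb orbT.
    have h1 : R*(d.+1*A) >= R*(k*A) by rewrite leq_mul2l leq_mul2r kd !orbT.
    rewrite /B /R /k in h1 h2 hA *. lia.
  + have h1 : R*(d.+1*A) >= R*A by rewrite leq_mul2l leq_pmull ?orbT.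
    have h3 : R*(e.+1*B) >= R * B by rewrite leq_mul2l leq_pmull ?orbT.
    rewrite /B /R /k in h1 h3 hA hB *. lia.
Qed.

Lemma nth_flatten_unif (T : Type) (x0 : T) N (ss : seq (seq T)) i :
  0 < N -> all (fun s => size s == N) ss -> i < N * size ss ->
  nth x0 (flatten ss) i = nth x0 (nth [::] ss (i %/ N)) (i %% N).
Proof.
move=> N0; elim: ss i => [|s ss IH] i /=; first by rewrite muln0.
case/andP=> /eqP hs hall hi.
rewrite nth_cat hs.
case: (ltnP i N) => hiN.
  by rewrite divn_small // modn_small.
have [j ij] : exists j, i = 1 * N + j by exists (i - N); rewrite mul1n subnKC.
subst i.
rewrite divnMDl // modnMDl add1n /= mul1n addKn IH //.
by move: hi; rewrite mulnS; lia.
Qed.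

Lemma size_fblock k L A : 0 < A -> A %| L -> size (fblock k L A) = k * L.
Proof.
move=> A0 AL; rewrite /fblock size_flatten /shape map_nseq sumn_nseq.
rewrite size_flatten /shape -map_comp.
have -> : [seq (size \o (fun i => nseq A i)) j | j <- iota 1 k] = nseq k A.
  by elim: k 1 => [|k IH] m //=; rewrite size_nseq IH.
by rewrite sumn_nseq [_ * (L %/ A)]mulnC mulnA divnK // mulnC.
Qed.

Lemma nth_fblock k L A o : 0 < A -> A %| L -> o < k * L ->
  nth 0 (fblock k L A) o = o %/ A %% k + 1.
Proof.
move=> A0 AL ho.
have k0 : 0 < k by case: k ho => //; rewrite mul0n.
have kA0 : 0 < k * A by rewrite muln_gt0 k0.
rewrite /fblock (@nth_flatten_unif _ _ (k * A)) //; last first.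
  by rewrite size_nseq -mulnA [A * _]mulnC divnK.
- apply/allP=> s /nseqP [-> _].
  rewrite size_flatten /shape -map_comp.
  have -> : [seq (size \o (fun i => nseq A i)) j | j <- iota 1 k] = nseq k A.
    by elim: k {ho k0 kA0} 1 => [|k IH] m //=; rewrite size_nseq IH.
  by rewrite sumn_nseq mulnC.
rewrite nth_nseq.
have -> : o %/ (k * A) < L %/ A.
  by rewrite ltn_divLR // mulnCA divnK.
rewrite (@nth_flatten_unif _ _ A) //; last first.
- by rewrite size_map size_iota [A * k]mulnC ltn_pmod.
- by apply/allP=> s /mapP [i _ ->]; rewrite size_nseq.
rewrite (nth_map 0); last first.
  by rewrite size_iota ltn_divLR // ltn_pmod.
rewrite nth_nseq ltn_pmod // nth_iota; last by rewrite ltn_divLR // ltn_pmod.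
by rewrite modn_divl addnC.
Qed.

Definition scl (R L k : nat) (w : seq nat) (p : nat) := R ^ (nth 0 w (p %/ (k * L))).-1.

Lemma sym_bounds K w i : word_over K w -> i < size w -> 1 <= nth 0 w i <= K.
Proof. by move=> /allP H hi; apply: H; rewrite mem_nth. Qed.

Lemma size_hat k K R L w : 0 < R -> R ^ K.-1 %| L -> word_over K w ->
  size (hat k L R w) = k * L * size w.
Proof.
move=> R0 hL hw; rewrite /hat size_flatten /shape -map_comp.
have -> : [seq (size \o (fun l => fblock k L (R ^ l.-1))) j | j <- w] = nseq (size w) (k * L).
  elim: w hw => [|l w IH] //= /andP [hl hw]; rewrite IH // size_fblock ?expn_gt0 ?R0 //.
  apply: dvdn_trans hL; apply: dvdn_exp2l; case/andP: hl => _; lia.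
by rewrite sumn_nseq.
Qed.

Lemma scl_facts k K R L w p : 0 < k -> 0 < R -> 0 < L -> R ^ K.-1 %| L -> word_over K w ->
  p < size (hat k L R w) ->
  [/\ p %/ (k * L) < size w, 1 <= nth 0 w (p %/ (k * L)) <= K, 0 < scl R L k w p,
      scl R L k w p %| L & scl R L k w p <= R ^ K.-1].
Proof.
move=> k0 R0 L0 hL hw; rewrite (@size_hat k K R L w R0 hL hw) => hp.
have kL0 : 0 < k * L by rewrite muln_gt0 k0.
have hi : p %/ (k * L) < size w by rewrite ltn_divLR // mulnC.
have /andP [h1 h2] := @sym_bounds K w _ hw hi.
have hle : (nth 0 w (p %/ (k * L))).-1 <= K.-1 by lia.
split => //.
- by rewrite h1 h2.
- by rewrite /scl expn_gt0 R0.
- rewrite /scl; exact: dvdn_trans (dvdn_exp2l _ hle) hL.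
- rewrite /scl; exact: leq_pexp2l.
Qed.

Lemma nth_hat k K R L w p : 0 < k -> 0 < R -> 0 < L -> R ^ K.-1 %| L -> word_over K w ->
  p < size (hat k L R w) ->
  nth 0 (hat k L R w) p = p %/ scl R L k w p %% k + 1.
Proof.
move=> k0 R0 L0 hL hw hp.
have [hi _ A0 AL _] := @scl_facts k K R L w p k0 R0 L0 hL hw hp.
have kL0 : 0 < k * L by rewrite muln_gt0 k0.
move: hp; rewrite (@size_hat k K R L w R0 hL hw) => hp.
rewrite /hat (@nth_flatten_unif _ _ (k * L)) //; last first.
- by rewrite size_map.
- apply/allP=> s /mapP [l hl ->]; rewrite size_fblock ?expn_gt0 ?R0 //.
  have /andP [_ h2] := allP hw l hl.
  apply: dvdn_trans hL; apply: dvdn_exp2l; lia.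
rewrite (nth_map 0) // nth_fblock //; last by rewrite ltn_pmod.
rewrite -/(scl R L k w p).
rewrite !modn_divl; congr (_ %/ _ + 1).
have hd : k * scl R L k w p %| k * L by rewrite dvdn_pmul2l.
by rewrite (modn_dvdm _ hd).
Qed.

Lemma positionsE b : positions b = mask b (iota 0 (size b)).
Proof.
rewrite /positions filter_mask; congr mask.
by have := mkseq_nth false b; rewrite /mkseq.
Qed.

Lemma maskE (u : seq nat) b : size b = size u ->
  mask b u = map (nth 0 u) (positions b).
Proof.
move=> hs; rewrite positionsE map_mask hs.
by have := mkseq_nth 0 u; rewrite /mkseq => ->.
Qed.

Lemma positions_sorted b : sorted ltn (positions b).
Proof.
rewrite positionsE; apply: (subseq_sorted ltn_trans (mask_subseq _ _)).
exact: iota_ltn_sorted.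
Qed.

Lemma positions_lt b : all (fun i => i < size b) (positions b).
Proof.
apply/allP => i; rewrite positionsE => /mem_mask; by rewrite mem_iota.
Qed.

Lemma subseq_nth_idx (w : seq nat) (I : seq nat) :
  sorted ltn I -> all (fun i => i < size w) I -> subseq (map (nth 0 w) I) w.
Proof.
move=> sI aI.
have -> : I = [seq i <- iota 0 (size w) | i \in I].
  apply: (irr_sorted_eq ltn_trans ltnn sI).
    by apply: sorted_filter; [exact: ltn_trans | exact: iota_ltn_sorted].
  move=> i; rewrite mem_filter mem_iota /=.
  case hi: (i \in I) => //=; by have := allP aI i hi.
rewrite filter_mask map_mask.
set m := [seq _ \in I | _ <- _].
have -> : map (nth 0 w) (iota 0 (size w)) = w by have := mkseq_nth 0 w.
exact: mask_subseq.
Qed.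

Lemma LCS_ge (w1 w2 s : seq nat) : subseq s w1 -> subseq s w2 -> size s <= LCS w1 w2.
Proof.
move=> /subseqP [m hm ->] h2.
rewrite /LCS.
have hm' : size m == size w1 by apply/eqP.
exact: (@leq_bigmax_cond _ (fun b : (size w1).-tuple bool => subseq (mask b w1) w2)
          (fun b : (size w1).-tuple bool => size (mask b w1)) (Tuple hm')).
Qed.

Definition le2 (x y : nat * nat) := (x.1 <= y.1) && (x.2 <= y.2).
Definition lt2 (x y : nat * nat) := (x.1 < y.1) && (x.2 < y.2).

Lemma lt2_trans : transitive lt2.
Proof. move=> y x z /andP [h1 h2] /andP [h3 h4]; apply/andP; split; lia. Qed.

Lemma count_split (T : Type) (a p : pred T) s :
  count a s <= count a (filter p s) + count (predC p) s.
Proof. elim: s => //= y s IH; case: (p y) => /=; case: (a y) => /=; lia. Qed.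

Lemma count_le_all (T : Type) (a b : pred T) s :
  all (fun y => a y ==> b y) s -> count a s <= count b s.
Proof. elim: s => //= y s IH /andP [h1 h2]; move: h1; case: (a y); case: (b y) => //=; have := IH h2; lia. Qed.

Lemma count_filter_le (T : Type) (a p : pred T) s : count a (filter p s) <= count a s.
Proof. by rewrite count_filter; apply: sub_count => y /andP []. Qed.

Lemma chain N (sm : pred (nat * nat)) (l : seq (nat * nat)) :
  pairwise le2 l ->
  (forall i, count (fun x => x.1 == i) l <= N) ->
  (forall j, count (fun x => x.2 == j) l <= N) ->
  exists S, [/\ {subset S <= l}, all sm S, sorted lt2 S & count sm l <= 2 * N * size S].
Proof.
move: {2}(size l) (leqnn (size l)) => n; elim: n l => [|n IH] l.
  by case: l => // _ _ _ _; exists [::].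
case: l => [|x l'] hs hp hr hc; first by exists [::].
move: hp => /= /andP [hx hp'].
have hr' : forall i, count (fun y => y.1 == i) l' <= N.
  by move=> i; have := hr i => /=; lia.
have hc' : forall j, count (fun y => y.2 == j) l' <= N.
  by move=> j; have := hc j => /=; lia.
case hsx: (sm x); last first.
  have [S [h1 h2 h3 h4]] := IH l' hs hp' hr' hc'.
  exists S; split => //; first by move=> y /h1 hy; rewrite inE hy orbT.
set rest := filter (lt2 x) l'.
have hsr : size rest <= n by rewrite /rest size_filter; have := count_size (lt2 x) l'; simpl in hs; lia.
have [S [h1 h2 h3 h4]] := IH rest hsr (pairwise_filter _ hp')
  (fun i => leq_trans (count_filter_le _ _ _ _) (hr' i))
  (fun j => leq_trans (count_filter_le _ _ _ _) (hc' j)).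
exists (x :: S); split.
- move=> y; rewrite inE => /orP [/eqP ->|/h1]; first by rewrite inE eqxx.
  by rewrite /rest mem_filter inE => /andP [_ ->]; rewrite orbT.
- by rewrite /= hsx h2.
- rewrite /= (path_sortedE lt2_trans) h3 andbT.
  by apply/allP => y /h1; rewrite /rest mem_filter => /andP [].
have hr1 := hr x.1; have hc1 := hc x.2.
rewrite /= !eqxx /= in hr1 hc1.
have e1 := count_split _ sm (lt2 x) l'.
have e2 : count (predC (lt2 x)) l' <=
    count (fun y : nat * nat => y.1 == x.1) l' + count (fun y : nat * nat => y.2 == x.2) l'.
  rewrite -count_predUI; apply: leq_trans (leq_addr _ _).
  apply: count_le_all; apply/allP => y hy; move: (allP hx y hy).
  rewrite /le2 /lt2 /= => /andP [a1 a2]; apply/implyP => h.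
  apply/orP; move: h; rewrite negb_and -!leqNgt => /orP [h|h].
    by left; rewrite eqn_leq h a1.
  by right; rewrite eqn_leq h a2.
rewrite /= mulnS -/rest.
rewrite -/rest in e1.
move: hr1 hc1 e2.
set c1 := count (fun y : nat * nat => y.1 == x.1) l'.
set c2 := count (fun y : nat * nat => y.2 == x.2) l'.
move=> hr1 hc1 e2.
clearbody rest c1 c2. move: (count sm rest) (count sm l') (count (predC (lt2 x)) l') (2 * N * size S) h4 e1 e2 => a b c d. lia.
Qed.


Lemma mod_step k pi d : 0 < d -> (pi + d) %% k = pi %% k -> k <= d.
Proof.
move=> d0 h; have : pi + d == pi + 0 %[mod k] by rewrite addn0 h.
rewrite eqn_modDl mod0n => /eqP hd.
apply: dvdn_leq => //; exact/eqP.
Qed.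

Lemma core2 k R A B p q p' q' :
  0 < k -> k <= R -> 0 < A -> R * A <= B -> p < p' -> q < q' ->
  p %/ A %% k = q %/ B %% k -> p' %/ A %% k = q' %/ B %% k ->
  R * (p + q) + R * (k + 1) + R * k.-1 * (p %% A) + k * (q' %% B)
  <= R * (p' + q') + k + R * k.-1 * (p' %% A) + k * (q %% B).
Proof.
move=> k0 kR A0 RAB hp hq l1 l2.
have B0 : 0 < B by apply: leq_trans RAB; rewrite muln_gt0 A0 (leq_trans k0 kR).
set j := k.-1; set s := R - k; set t := B - R * A.
have Ek : k = j.+1 by rewrite /j prednK.
have ER : R = j.+1 + s by rewrite -Ek /s subnKC.
have EB : B = (j.+1 + s) * A + t by rewrite /t -ER subnKC.
have hpp : p %/ A <= p' %/ A by apply: leq_div2r; apply: ltnW.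
have hqq : q %/ B <= q' %/ B by apply: leq_div2r; apply: ltnW.
set pi := p %/ A; set d := p' %/ A - pi; set rho := q %/ B; set e := q' %/ B - rho.
have Ep : p = pi * A + p %% A by rewrite {1}(divn_eq p A).
have Ep' : p' = (pi + d) * A + p' %% A by rewrite /d subnKC // {1}(divn_eq p' A).
have Eq : q = rho * B + q %% B by rewrite {1}(divn_eq q B).
have Eq' : q' = (rho + e) * B + q' %% B by rewrite /e subnKC // {1}(divn_eq q' B).
have hl : e = 0 -> d = 0 \/ k <= d.
  move=> e0; case: (posnP d) => [|dpos]; [by left | right].
  apply: (@mod_step k pi d) => //.
  have : q' %/ B = rho by apply/eqP; rewrite eqn_leq hqq andbT -subn_eq0 -/rho -/e e0.
  move=> hq'; rewrite /d subnKC // l2 hq' -l1 //.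
have := @core_nat j s A t pi (p %% A) d (p' %% A) rho (q %% B) e (q' %% B) A0
  (ltn_pmod _ A0) (ltn_pmod _ A0).
rewrite -EB -Ep -Ep' -Eq -Eq' -ER -Ek.
move=> /(_ (ltn_pmod _ B0) (ltn_pmod _ B0) hp hq hl).
by rewrite addn1.
Qed.

Import Order.TTheory GRing.Theory Num.Theory.

Definition HYP k K R L w1 w2 :=
  [/\ 2 <= k, k <= R, 0 < L, R ^ K.-1 %| L & word_over K w1 /\ word_over K w2].

Definition PR k R L w1 w2 (x : nat * nat) : rat :=
  let A := scl R L k w1 x.1 in let B := scl R L k w2 x.2 in
  if A < B then ((k * (x.2 %% B))%:R - (R * k.-1 * (x.1 %% A))%:R)%R
  else if B < A then ((k * (x.1 %% A))%:R - (R * k.-1 * (x.2 %% B))%:R)%R else 0%R.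

Definition same k R L w1 w2 (x : nat * nat) : bool := scl R L k w1 x.1 == scl R L k w2 x.2.
Definition blk k L (x : nat * nat) := x.1 %/ (k * L) + x.2 %/ (k * L).
Definition good k R L w1 w2 (x : nat * nat) :=
  [&& x.1 < size (hat k L R w1), x.2 < size (hat k L R w2) &
      nth 0 (hat k L R w1) x.1 == nth 0 (hat k L R w2) x.2].

Lemma pow_lt R a b : 1 < R -> R ^ a < R ^ b -> R * R ^ a <= R ^ b.
Proof. by move=> R1; rewrite ltn_exp2l // => ab; rewrite -expnS leq_pexp2l // ltnW. Qed.

Lemma pow_neq R a b M : 1 < R -> R ^ a != R ^ b -> R ^ a <= M -> R ^ b <= M -> R <= M.
Proof.
move=> R1; rewrite eqn_exp2l // => ab ha hb.
case: (ltngtP a b) ab => // h _.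
- apply: leq_trans hb; rewrite -{1}(expn1 R) leq_pexp2l //; [exact: ltnW | by case: b h].
- apply: leq_trans ha; rewrite -{1}(expn1 R) leq_pexp2l //; [exact: ltnW | by case: a h].
Qed.


Lemma PR_bounds k K R L w1 w2 x : HYP k K R L w1 w2 ->
  x.1 < size (hat k L R w1) -> x.2 < size (hat k L R w2) ->
  (- ((R * R ^ K.-1)%:R : rat) <= PR k R L w1 w2 x <= (R * R ^ K.-1)%:R)%R.
Proof.
case=> k2 kR L0 hL [hw1 hw2] h1 h2.
have k0 : 0 < k by apply: leq_trans k2.
have R1 : 1 < R by apply: leq_trans kR.
have R0 : 0 < R by apply: ltnW.
have [_ _ A0 _ AM] := @scl_facts k K R L w1 x.1 k0 R0 L0 hL hw1 h1.
have [_ _ B0 _ BM] := @scl_facts k K R L w2 x.2 k0 R0 L0 hL hw2 h2.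
rewrite /PR.
set A := scl R L k w1 x.1; set B := scl R L k w2 x.2.
set M := R ^ K.-1.
have gen : forall a b A B, 0 < A -> R * A <= B -> B <= M ->
   (k * (b %% B) <= R * M) && (R * k.-1 * (a %% A) <= R * M).
  move=> a b A' B' A0' RAB BM'.
  have B0' : 0 < B' by apply: leq_trans RAB; rewrite muln_gt0 A0' R0.
  apply/andP; split.
    apply: leq_mul => //; apply: leq_trans BM'; exact: ltnW (ltn_pmod _ B0').
  rewrite -mulnA leq_mul2l; apply/orP; right.
  apply: leq_trans BM'; apply: leq_trans RAB.
  apply: leq_mul; last exact: ltnW (ltn_pmod _ A0').
  by apply: leq_trans kR; apply: leq_pred.
case: ifP => hAB.
  have /andP [g1 g2] := gen x.1 x.2 A B A0 (@pow_lt R _ _ R1 hAB) BM.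
  move: g1 g2; rewrite -!(ler_nat rat) => g1 g2.
  have g3 := ler0n rat (k * (x.2 %% B)); have g4 := ler0n rat (R * k.-1 * (x.1 %% A)).
  apply/andP; split; lra.
case: ifP => hBA.
  have /andP [g1 g2] := gen x.2 x.1 B A B0 (@pow_lt R _ _ R1 hBA) AM.
  move: g1 g2; rewrite -!(ler_nat rat) => g1 g2.
  have g3 := ler0n rat (k * (x.1 %% A)); have g4 := ler0n rat (R * k.-1 * (x.2 %% B)).
  apply/andP; split; lra.
by rewrite oppr_le0 ler0n.
Qed.

Lemma letter_eq k K R L w1 w2 x : HYP k K R L w1 w2 -> good k R L w1 w2 x ->
  x.1 %/ scl R L k w1 x.1 %% k = x.2 %/ scl R L k w2 x.2 %% k.
Proof.
case=> k2 kR L0 hL [hw1 hw2] /and3P [h1 h2 /eqP he].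
have k0 : 0 < k by apply: leq_trans k2.
have R0 : 0 < R by apply: leq_trans kR.
rewrite (@nth_hat k K R L w1 x.1 k0 R0 L0 hL hw1 h1) (@nth_hat k K R L w2 x.2 k0 R0 L0 hL hw2 h2) in he.
exact: (addIn he).
Qed.

Lemma step k K R L w1 w2 x y : HYP k K R L w1 w2 ->
  good k R L w1 w2 x -> good k R L w1 w2 y -> x.1 < y.1 -> x.2 < y.2 ->
  (((R * (x.1 + x.2))%:R + (R * (k + 1))%:R - k%:R + PR k R L w1 w2 y - PR k R L w1 w2 x
    - (R * k.-1)%:R * (same k R L w1 w2 y)%:R
    - (3 * R ^ K.-1 * R)%:R * ((blk k L y)%:R - (blk k L x)%:R) : rat)
   <= (R * (y.1 + y.2))%:R)%R.
Proof.
move=> H gx gy hxy1 hxy2.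
have lx := @letter_eq k K R L w1 w2 x H gx; have ly := @letter_eq k K R L w1 w2 y H gy.
have [hPx1 hPx2] : x.1 < size (hat k L R w1) /\ x.2 < size (hat k L R w2).
  by case/and3P: gx.
have [hPy1 hPy2] : y.1 < size (hat k L R w1) /\ y.2 < size (hat k L R w2).
  by case/and3P: gy.
have /andP [bx1 bx2] := @PR_bounds k K R L w1 w2 x H hPx1 hPx2.
have /andP [by1 by2] := @PR_bounds k K R L w1 w2 y H hPy1 hPy2.
case: H => k2 kR L0 hL [hw1 hw2].
have k0 : 0 < k by apply: leq_trans k2.
have R1 : 1 < R by apply: leq_trans kR.
have R0 : 0 < R by apply: ltnW.
set M := R ^ K.-1 in bx1 bx2 by1 by2 *.
have base : R * (x.1 + x.2) + 2 * R <= R * (y.1 + y.2).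
  by rewrite [2 * R]mulnC -mulnDr leq_mul2l; apply/orP; right; move: hxy1 hxy2; clear; lia.
have kk : R * (k + 1) = R * k.-1 + 2 * R.
  by rewrite -[in LHS](prednK k0); move: (k.-1) => j; clear; lia.
rewrite -(ler_nat rat) !natrD in base.
have kk' : ((R * (k + 1))%:R = (R * k.-1)%:R + (2 * R)%:R :> rat)%R by rewrite kk natrD.
have hy1 : x.1 %/ (k * L) <= y.1 %/ (k * L) by apply: leq_div2r; apply: ltnW.
have hy2 : x.2 %/ (k * L) <= y.2 %/ (k * L) by apply: leq_div2r; apply: ltnW.
have M3 : ((3 * M * R)%:R = (R * M)%:R + (R * M)%:R + (R * M)%:R :> rat)%R.
  by rewrite -!natrD; congr (GRing.natmul 1 _); clear; lia.
have kpos := ler0n rat k. have Rpos := ler0n rat R.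
case E: ((x.1 %/ (k * L) == y.1 %/ (k * L)) && (x.2 %/ (k * L) == y.2 %/ (k * L))).
- move/andP: E => [/eqP e1 /eqP e2].
  have sA : scl R L k w1 y.1 = scl R L k w1 x.1 by rewrite /scl -e1.
  have sB : scl R L k w2 y.2 = scl R L k w2 x.2 by rewrite /scl -e2.
  have eb : blk k L y = blk k L x by rewrite /blk -e1 -e2.
  rewrite eb subrr mulr0 subr0.
  rewrite sA sB in ly.
  rewrite /PR /same sA sB.
  set A := scl R L k w1 x.1; set B := scl R L k w2 x.2.
  have A0 : 0 < A by rewrite /A /scl expn_gt0 R0.
  have B0 : 0 < B by rewrite /B /scl expn_gt0 R0.
  case: (ltngtP A B) => hAB.
  + have RAB : R * A <= B by apply: (@pow_lt R _ _ R1 hAB).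
    have := @core2 k R A B x.1 x.2 y.1 y.2 k0 kR A0 RAB hxy1 hxy2 lx ly.
    rewrite -(ler_nat rat) !natrD => C.
    rewrite mulr0 subr0. lra.
  + have RAB : R * B <= A by apply: (@pow_lt R _ _ R1 hAB).
    have := @core2 k R B A x.2 x.1 y.2 y.1 k0 kR B0 RAB hxy2 hxy1 (esym lx) (esym ly).
    rewrite [x.2 + x.1]addnC [y.2 + y.1]addnC.
    rewrite -(ler_nat rat) !natrD => C.
    rewrite mulr0 subr0. lra.
  + rewrite mulr1. lra.
- have hb : blk k L x + 1 <= blk k L y.
    rewrite /blk; move: E hy1 hy2; case: (ltngtP (x.1 %/ (k * L)) (y.1 %/ (k * L)));
    case: (ltngtP (x.2 %/ (k * L)) (y.2 %/ (k * L))) => //=; clear; lia.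
  have FD : ((3 * M * R)%:R <= (3 * M * R)%:R * ((blk k L y)%:R - (blk k L x)%:R) :> rat)%R.
    rewrite -natrB; last by move: hb; clear; lia.
    rewrite -natrM ler_nat -{1}(muln1 (3 * M * R)) leq_mul2l; apply/orP; right.
    by move: hb; clear; lia.
  case Sy: (same k R L w1 w2 y).
  + have P0 : PR k R L w1 w2 y = 0%R.
      by rewrite /PR; move: Sy; rewrite /same => /eqP ->; rewrite ltnn.
    rewrite P0 mulr1. lra.
  + have kM : R * k <= R * M.
      rewrite leq_mul2l; apply/orP; right; apply: leq_trans kR _.
      have [_ _ _ _ AM] := @scl_facts k K R L w1 y.1 k0 R0 L0 hL hw1 hPy1.
      have [_ _ _ _ BM] := @scl_facts k K R L w2 y.2 k0 R0 L0 hL hw2 hPy2.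
      move: Sy; rewrite /same => /negbT Sy.
      exact: (@pow_neq R _ _ M R1 Sy AM BM).
    move: kM; rewrite -(ler_nat rat) => kM.
    have kk2 : ((R * (k + 1))%:R = (R * k)%:R + R%:R :> rat)%R by rewrite -natrD mulnDr muln1.
    rewrite mulr0 subr0. lra.
Qed.

Lemma tele k K R L w1 w2 x s : HYP k K R L w1 w2 ->
  path lt2 x s -> all (good k R L w1 w2) (x :: s) ->
  (((R * (x.1 + x.2))%:R + (size s)%:R * ((R * (k + 1))%:R - k%:R)
    + PR k R L w1 w2 (last x s) - PR k R L w1 w2 x
    - (R * k.-1)%:R * (count (same k R L w1 w2) s)%:R
    - (3 * R ^ K.-1 * R)%:R * ((blk k L (last x s))%:R - (blk k L x)%:R) : rat)
   <= (R * ((last x s).1 + (last x s).2))%:R)%R.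
Proof.
move=> H; elim: s x => [|y s IH] x /=.
  by move=> _ _; rewrite !subrr !mulr0 !mul0r; lra.
move=> /andP [/andP [h1 h2] hp] /and3P [gx gy ga].
have := IH y hp (introT andP (conj gy ga)).
have := @step k K R L w1 w2 x y H gx gy h1 h2.
rewrite natrD -addn1 natrD.
set P1 := PR k R L w1 w2 (last y s).
set c := ((3 * R ^ K.-1 * R)%:R : rat)%R.
move=> S1 S2.
have e : (c * ((blk k L (last y s))%:R - (blk k L x)%:R) =
   c * ((blk k L (last y s))%:R - (blk k L y)%:R) + c * ((blk k L y)%:R - (blk k L x)%:R) :> rat)%R.
  by rewrite -mulrDr addrA subrK.
rewrite e.
lra.
Qed.

Import Order.TTheory GRing.Theory Num.Theory.

Lemma zip_path p q (P Q : seq nat) : size P = size Q ->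
  path ltn p P -> path ltn q Q -> path lt2 (p, q) (zip P Q).
Proof.
elim: P Q p q => [|p' P IH] [|q' Q] p q //= [hs] /andP [h1 h2] /andP [h3 h4].
by rewrite /lt2 /= h1 h3 /= IH.
Qed.

Lemma zip_last p q (P Q : seq nat) : size P = size Q ->
  last (p, q) (zip P Q) = (last p P, last q Q).
Proof. by elim: P Q p q => [|p' P IH] [|q' Q] p q //= [hs]; rewrite IH. Qed.

Lemma path_last_ge p (P : seq nat) : path ltn p P -> p <= last p P.
Proof.
elim: P p => [|p' P IH] p //= /andP [h1 h2].
by apply: leq_trans (ltnW h1) (IH _ h2).
Qed.

Lemma all_zip_good (P Q : seq nat) (f g : nat -> nat) n1 n2 :
  map f P = map g Q -> all (fun i => i < n1) P -> all (fun i => i < n2) Q ->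
  all (fun x => [&& x.1 < n1, x.2 < n2 & f x.1 == g x.2]) (zip P Q).
Proof.
elim: P Q => [|p P IH] [|q Q] //= [e1 e2] /andP [h1 h2] /andP [h3 h4].
by rewrite h1 h3 e1 eqxx /= IH.
Qed.

Lemma count_block N i (P : seq nat) : 0 < N -> sorted ltn P ->
  count (fun p => p %/ N == i) P <= N.
Proof.
move=> N0 sP; rewrite -size_filter.
rewrite -{2}(size_iota (i * N) N).
apply: uniq_leq_size.
  by apply: filter_uniq; apply: (sorted_uniq ltn_trans ltnn).
move=> p; rewrite mem_filter mem_iota => /andP [/eqP hp _].
have := divn_eq p N; have := ltn_pmod p N0; rewrite hp; clear; lia.
Qed.

Lemma count_zip1 (P Q : seq nat) (a : pred nat) : size P = size Q ->
  count (fun x => a x.1) (zip P Q) = count a P.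
Proof. move=> hs; have h : size P <= size Q by rewrite hs. by rewrite -{2}(unzip1_zip h) count_map. Qed.

Lemma count_zip2 (P Q : seq nat) (a : pred nat) : size P = size Q ->
  count (fun x => a x.2) (zip P Q) = count a Q.
Proof. move=> hs; have h : size Q <= size P by rewrite hs. by rewrite -{2}(unzip2_zip h) count_map. Qed.

Lemma same_sm k K R L w1 w2 x : HYP k K R L w1 w2 -> good k R L w1 w2 x ->
  same k R L w1 w2 x -> nth 0 w1 (x.1 %/ (k * L)) == nth 0 w2 (x.2 %/ (k * L)).
Proof.
case=> k2 kR L0 hL [hw1 hw2] /and3P [h1 h2 _].
have k0 : 0 < k by apply: leq_trans k2.
have R1 : 1 < R by apply: leq_trans kR.
have R0 : 0 < R by apply: ltnW.
have [_ /andP [a1 _] _ _ _] := @scl_facts k K R L w1 x.1 k0 R0 L0 hL hw1 h1.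
have [_ /andP [b1 _] _ _ _] := @scl_facts k K R L w2 x.2 k0 R0 L0 hL hw2 h2.
rewrite /same /scl eqn_exp2l //.
move: a1 b1; move: (nth 0 w1 _) (nth 0 w2 _) => a b; clear; move=> a1 b1 /eqP h.
apply/eqP; lia.
Qed.

Lemma same_LCS k K R L w1 w2 (Z : seq (nat * nat)) : HYP k K R L w1 w2 ->
  pairwise lt2 Z -> all (good k R L w1 w2) Z ->
  (forall i, count (fun x => x.1 %/ (k * L) == i) Z <= k * L) ->
  (forall j, count (fun x => x.2 %/ (k * L) == j) Z <= k * L) ->
  count (same k R L w1 w2) Z <= 2 * (k * L) * LCS w1 w2.
Proof.
move=> H pZ gZ hr hc.
have H' := H; case: H' => k2 kR L0 hL [hw1 hw2].
have k0 : 0 < k by apply: leq_trans k2.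
have R0 : 0 < R by apply: leq_trans kR.
have kL0 : 0 < k * L by rewrite muln_gt0 k0.
pose f := fun x : nat * nat => (x.1 %/ (k * L), x.2 %/ (k * L)).
pose sm := fun y : nat * nat => nth 0 w1 y.1 == nth 0 w2 y.2.
have pl : pairwise le2 (map f Z).
  rewrite pairwise_map; apply: sub_pairwise pZ => x y /andP [h1 h2].
  by rewrite /relpre /le2 /= !leq_div2r // ltnW.
have hr' : forall i, count (fun y => y.1 == i) (map f Z) <= k * L.
  by move=> i; rewrite count_map; exact: hr i.
have hc' : forall j, count (fun y => y.2 == j) (map f Z) <= k * L.
  by move=> j; rewrite count_map; exact: hc j.
have [S [hsub hsm hsort hcnt]] := @chain (k * L) sm (map f Z) pl hr' hc'.
have c1 : count (same k R L w1 w2) Z <= count sm (map f Z).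
  rewrite count_map; apply: count_le_all; apply/allP => x hx; apply/implyP => hs.
  exact: (@same_sm k K R L w1 w2 x H (allP gZ x hx) hs).
have hmem : forall y, y \in S -> y.1 < size w1 /\ y.2 < size w2.
  move=> y /hsub /mapP [x hx ->] /=.
  case/and3P: (allP gZ x hx) => h1 h2 _.
  have [a _ _ _ _] := @scl_facts k K R L w1 x.1 k0 R0 L0 hL hw1 h1.
  have [b _ _ _ _] := @scl_facts k K R L w2 x.2 k0 R0 L0 hL hw2 h2.
  by [].
have srt1 : sorted ltn (map fst S).
  by apply: (homo_sorted (e := lt2)) => // x y /andP [].
have srt2 : sorted ltn (map snd S).
  by apply: (homo_sorted (e := lt2)) => // x y /andP [].
have a1 : all (fun i => i < size w1) (map fst S).
  by apply/allP => i /mapP [y hy ->]; case: (hmem y hy).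
have a2 : all (fun i => i < size w2) (map snd S).
  by apply/allP => i /mapP [y hy ->]; case: (hmem y hy).
have s1 := @subseq_nth_idx w1 _ srt1 a1.
have s2 := @subseq_nth_idx w2 _ srt2 a2.
have e : map (nth 0 w1) (map fst S) = map (nth 0 w2) (map snd S).
  rewrite -!map_comp; apply/eq_in_map => y hy /=.
  exact/eqP/(allP hsm).
rewrite e in s1.
have := @LCS_ge w1 w2 _ s1 s2; rewrite !size_map => hL2.
apply: leq_trans c1 _; apply: leq_trans hcnt _.
by rewrite leq_mul2l hL2 orbT.
Qed.

Import Order.TTheory GRing.Theory Num.Theory.

Theorem lemma3p5 (k K R L : nat) (w1 w2 : seq nat) (b1 b2 : bitseq) :
  (2 <= k)%N -> (1 <= K)%N -> (k <= R)%N -> (0 < L)%N -> (R ^ K.-1 %| L)%N ->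
  word_over K w1 -> word_over K w2 ->
  common_subseq (hat k L R w1) (hat k L R w2) b1 b2 ->
  ((k%:R + 1 - k%:R / R%:R - 8 * (R ^ K.-1)%:R / L%:R) * (cs_len (hat k L R w1) b1)%:R
     - 2 * L%:R * k%:R * (k%:R + 1) * (LCS w1 w2)%:R - 16 * (R ^ K.-1)%:R
   <= (cs_span b1 b2)%:R :> rat)%R.
Proof.
move=> k2 K1 kR L0 hL hw1 hw2 [hs1 [hs2 hm]].
have H : HYP k K R L w1 w2 by split.
have k0 : 0 < k by apply: leq_trans k2.
have R1 : 1 < R by apply: leq_trans kR.
have R0 : 0 < R by apply: ltnW.
have kL0 : 0 < k * L by rewrite muln_gt0 k0.
rewrite /cs_len /cs_span /span_mask.
rewrite (@maskE (hat k L R w1) b1 hs1) in hm *.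
rewrite (@maskE (hat k L R w2) b2 hs2) in hm.
have sP := positions_sorted b1; have sQ := positions_sorted b2.
have aP := positions_lt b1; have aQ := positions_lt b2.
rewrite hs1 in aP; rewrite hs2 in aQ.
have hsz : size (positions b1) = size (positions b2).
  by rewrite -(size_map (nth 0 (hat k L R w1))) hm size_map.
rewrite size_map.
move: sP sQ aP aQ hsz hm.
case: (positions b1) => [|p P']; case: (positions b2) => [|q Q'] //= sP sQ aP aQ hsz hm.
  have pos : (0 <= 2 * L%:R * k%:R * (k%:R + 1) * (LCS w1 w2)%:R :> rat)%R.
    by rewrite !mulr_ge0 ?ler0n // addr_ge0 ?ler0n.
  have pM := ler0n rat (R ^ K.-1).
  rewrite mulr0; lra.
case: hsz => hsz'.
set lp := last p P'; set lq := last q Q'.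
have pZ := @zip_path p q P' Q' hsz' sP sQ.
have gZ : all (good k R L w1 w2) (zip (p :: P') (q :: Q')) :=
  @all_zip_good (p :: P') (q :: Q') _ _ _ _ hm aP aQ.
have T := @tele k K R L w1 w2 (p, q) (zip P' Q') H pZ gZ.
rewrite (@zip_last p q P' Q' hsz') size_zip hsz' minnn in T.
have gl : good k R L w1 w2 (lp, lq).
  rewrite /lp /lq -(@zip_last p q P' Q' hsz'); apply: (allP gZ); exact: mem_last.
have g0 : good k R L w1 w2 (p, q) by case/andP: gZ.
have /andP [bl1 bl2] := @PR_bounds k K R L w1 w2 (lp, lq) H
  (proj1 (andP gl)) (proj1 (andP (proj2 (andP gl)))).
have /andP [b01 b02] := @PR_bounds k K R L w1 w2 (p, q) H
  (proj1 (andP g0)) (proj1 (andP (proj2 (andP g0)))).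
have lpp : p <= lp := @path_last_ge p P' sP.
have lqq : q <= lq := @path_last_ge q Q' sQ.
have tl1 := leq_trunc_div lp (k * L); have tl2 := leq_trunc_div lq (k * L).
have tc1 := ltn_ceil p kL0; have tc2 := ltn_ceil q kL0.
have pw : pairwise lt2 (zip (p :: P') (q :: Q')).
  by rewrite -(sorted_pairwise lt2_trans).
have hr : forall i, count (fun x => x.1 %/ (k * L) == i) (zip (p :: P') (q :: Q')) <= k * L.
  move=> i; rewrite (@count_zip1 (p :: P') (q :: Q') (fun x => x %/ (k * L) == i)) /=; last by rewrite hsz'.
  exact: (@count_block (k * L) i (p :: P') kL0 sP).
have hc : forall j, count (fun x => x.2 %/ (k * L) == j) (zip (p :: P') (q :: Q')) <= k * L.
  move=> j; rewrite (@count_zip2 (p :: P') (q :: Q') (fun x => x %/ (k * L) == j)) /=; last by rewrite hsz'.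
  exact: (@count_block (k * L) j (q :: Q') kL0 sQ).
have G := @same_LCS k K R L w1 w2 _ H pw gZ hr hc.
have ecA : count (same k R L w1 w2) (zip (p :: P') (q :: Q')) =
   same k R L w1 w2 (p, q) + count (same k R L w1 w2) (zip P' Q') by [].
have G' : k.-1 * count (same k R L w1 w2) (zip (p :: P') (q :: Q'))
          <= (k + 1) * (2 * (k * L) * LCS w1 w2).
  by apply: leq_mul => //; apply: leq_trans (leq_pred k) (leq_addr 1 k).
rewrite ecA in G'.
have kM : ~~ same k R L w1 w2 (p, q) -> R * k <= R * R ^ K.-1.
  move=> Sy; rewrite leq_mul2l; apply/orP; right; apply: leq_trans kR _.
  case/and3P: g0 => h1 h2 _.
  have [_ _ _ _ AM] := @scl_facts k K R L w1 p k0 R0 L0 hL hw1 h1.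
  have [_ _ _ _ BM] := @scl_facts k K R L w2 q k0 R0 L0 hL hw2 h2.
  exact: (@pow_neq R _ _ (R ^ K.-1) R1 Sy AM BM).
have ek : ((k.-1)%:R = k%:R - 1 :> rat)%R by rewrite -{2}(prednK k0) mulrSr addrK.
rewrite /blk /= -/lp -/lq -hsz' in T.
rewrite !natrM !natrD ek in T.
rewrite -(ler_nat rat) !natrM !natrD ek in G'.
rewrite !natrM in bl1 bl2 b01 b02.
rewrite -(ler_nat rat) !natrM in tl1.
rewrite -(ler_nat rat) !natrM in tl2.
rewrite -(ler_nat rat) !natrM !mulrSr in tc1.
rewrite -(ler_nat rat) !natrM !mulrSr in tc2.
rewrite natrD !mulrSr !natrB //.
set M := R ^ K.-1 in T G' bl1 bl2 b01 b02 kM *.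
set nn := ((size P')%:R : rat)%R in T *.
set cZ := ((count (same k R L w1 w2) (zip P' Q'))%:R : rat)%R in T G' *.
set s0 := ((same k R L w1 w2 (p, q) : nat)%:R : rat)%R in G'.
set Lc := ((LCS w1 w2)%:R : rat)%R in G' *.
set Hb := (((lp %/ (k * L))%:R + (lq %/ (k * L))%:R - ((p %/ (k * L))%:R + (q %/ (k * L))%:R)) : rat)%R in T.
set Sx := ((lp%:R - p%:R + 1 + (lq%:R - q%:R + 1)) : rat)%R.
have Rr0 : (0 < (R%:R : rat))%R by rewrite ltr0n.
have alpha : ((nn + 1) * (R%:R * k%:R + R%:R - k%:R) - 3 * R%:R * M%:R
    - R%:R * (k%:R - 1) * (s0 + cZ) - 3 * M%:R * R%:R * Hb <= R%:R * Sx :> rat)%R.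
  have kp := ler0n rat k; have Rp := ler0n rat R; have Mp := ler0n rat M.
  have RMp : (0 <= (R%:R : rat) * M%:R)%R by rewrite mulr_ge0.
  rewrite /s0 /Sx; case: (same k R L w1 w2 (p, q)) kM => /= kM.
    lra.
  have := kM erefl; rewrite -(ler_nat rat) !natrM => kM'.
  lra.
have a1 : ((nn + 1) * (k%:R + 1 - k%:R / R%:R) - 3 * M%:R - (k%:R - 1) * (s0 + cZ)
    - 3 * M%:R * Hb <= Sx :> rat)%R.
  rewrite -(ler_pM2l Rr0).
  have -> : (R%:R * ((nn + 1) * (k%:R + 1 - k%:R / R%:R) - 3 * M%:R - (k%:R - 1) * (s0 + cZ)
    - 3 * M%:R * Hb) = (nn + 1) * (R%:R * k%:R + R%:R - k%:R) - 3 * R%:R * M%:R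
    - R%:R * (k%:R - 1) * (s0 + cZ) - 3 * M%:R * R%:R * Hb :> rat)%R.
    by field; rewrite pnatr_eq0 -lt0n.
  exact: alpha.
have bt : ((Hb - 2) * (k%:R * L%:R) <= Sx :> rat)%R by rewrite /Hb /Sx; lra.
have kp := ler0n rat k; have Lp := ler0n rat L; have Mp := ler0n rat M.
have nnp : (0 <= nn :> rat)%R by rewrite ler0n.
have Lcp : (0 <= Lc :> rat)%R by rewrite ler0n.
have Lr0 : (0 < (L%:R : rat))%R by rewrite ltr0n.
have kLp : (0 <= (k%:R * L%:R : rat))%R by rewrite mulr_ge0.
have k2r : (2 <= (k%:R : rat))%R by rewrite (ler_nat rat 2 k).
have ap : (0 <= (k%:R / R%:R : rat))%R by rewrite divr_ge0 // ltW.
have bp : (0 <= (M%:R / L%:R : rat))%R by rewrite divr_ge0 // ltW.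
have F1 := ler_wpM2l kLp a1.
have M3p : (0 <= 3 * (M%:R : rat))%R by rewrite mulr_ge0.
have F2 := ler_wpM2l M3p bt.
have eb : (k%:R * L%:R * (M%:R / L%:R) * (nn + 1) = k%:R * M%:R * (nn + 1) :> rat)%R.
  by field; rewrite pnatr_eq0 -lt0n.
have N1 : (0 <= M%:R * (nn + 1) * (5 * k%:R - 3) :> rat)%R.
  by apply: mulr_ge0; [apply: mulr_ge0 => //; lra | lra].
have N2 : (0 <= M%:R * (nn + 1) * (k%:R / R%:R) :> rat)%R.
  by apply: mulr_ge0 => //; apply: mulr_ge0 => //; lra.
have N3 : (0 <= M%:R * (M%:R / L%:R) * (nn + 1) :> rat)%R.
  by apply: mulr_ge0 => //; [apply: mulr_ge0 | lra].
have N4 : (0 <= (k%:R * L%:R) * ((k%:R + 1) * (2 * (k%:R * L%:R) * Lc) - (k%:R - 1) * (s0 + cZ)) :> rat)%R.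
  by rewrite mulr_ge0 // subr_ge0.
have N5 : (0 <= M%:R * (L%:R * k%:R * (k%:R + 1) * Lc) :> rat)%R.
  by apply: mulr_ge0 => //; apply: mulr_ge0 => //; apply: mulr_ge0; [apply: mulr_ge0 | lra].
have N6 : (0 <= M%:R * (k%:R * L%:R) :> rat)%R by rewrite mulr_ge0.
have N7 : (0 <= M%:R * M%:R :> rat)%R by rewrite mulr_ge0.
have c0 : (0 < (k%:R * L%:R + 3 * M%:R : rat))%R.
  by rewrite ltr_wpDr ?mulr_gt0 // ltr0n.
rewrite -(ler_pM2l c0).
lra.
Qed.
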